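(* Let the real variables be $c_{11},c_{22},c_{33},c_{44},c_{12},c_{23},c_{34},c_{41},s_{12},s_{23},s_{34},s_{41}$ (collectively $(c,s)$). Define $p_4=(c_{12}c_{34}-s_{12}s_{34})(c_{23}c_{41}-s_{23}s_{41})-(s_{12}c_{34}+c_{12}s_{34})(s_{23}c_{41}+c_{23}s_{41})-c_{11}c_{22}c_{33}c_{44}$, $p_{ij}=c_{ij}^2+s_{ij}^2-c_{ii}c_{jj}$ for $(i,j)\in\{(1,2),(2,3),(3,4),(4,1)\}$, $q_4^1=s_{12}c_{34}+c_{12}s_{34}+s_{23}c_{41}+c_{23}s_{41}$, $q_4^2=c_{12}c_{34}-s_{12}s_{34}-c_{23}c_{41}+s_{23}s_{41}$. Then $\{(c,s):p_4=p_{12}=p_{23}=p_{34}=p_{41}=0\}=\{(c,s):q_4^1=q_4^2=p_{12}=p_{23}=p_{34}=p_{41}=0\}$. *)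

(* Defs.v *)
From Stdlib Require Import Reals.
Open Scope R_scope.

Definition p4 (c11 c22 c33 c44 c12 c23 c34 c41 s12 s23 s34 s41 : R) : R :=
  (c12*c34 - s12*s34)*(c23*c41 - s23*s41)
  - (s12*c34 + c12*s34)*(s23*c41 + c23*s41)
  - c11*c22*c33*c44.

Definition pij (cij sij cii cjj : R) : R := cij^2 + sij^2 - cii*cjj.

Definition q41 (c12 c23 c34 c41 s12 s23 s34 s41 : R) : R :=
  s12*c34 + c12*s34 + s23*c41 + c23*s41.

Definition q42 (c12 c23 c34 c41 s12 s23 s34 s41 : R) : R :=
  c12*c34 - s12*s34 - c23*c41 + s23*s41.

(* Main.v *)
Require Import Defs.
From Stdlib Require Import Reals Lra.
Open Scope R_scope.

Lemma key c11 c22 c33 c44 c12 c23 c34 c41 s12 s23 s34 s41 :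
  (q41 c12 c23 c34 c41 s12 s23 s34 s41)^2 + (q42 c12 c23 c34 c41 s12 s23 s34 s41)^2
  = (c12^2+s12^2)*(c34^2+s34^2) + (c23^2+s23^2)*(c41^2+s41^2)
    - 2 * p4 c11 c22 c33 c44 c12 c23 c34 c41 s12 s23 s34 s41 - 2*(c11*c22*c33*c44).
Proof. unfold q41, q42, p4. ring. Qed.

Theorem proposition6 :
  forall c11 c22 c33 c44 c12 c23 c34 c41 s12 s23 s34 s41 : R,
    (p4 c11 c22 c33 c44 c12 c23 c34 c41 s12 s23 s34 s41 = 0 /\
     pij c12 s12 c11 c22 = 0 /\ pij c23 s23 c22 c33 = 0 /\
     pij c34 s34 c33 c44 = 0 /\ pij c41 s41 c44 c11 = 0)
    <->
    (q41 c12 c23 c34 c41 s12 s23 s34 s41 = 0 /\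
     q42 c12 c23 c34 c41 s12 s23 s34 s41 = 0 /\
     pij c12 s12 c11 c22 = 0 /\ pij c23 s23 c22 c33 = 0 /\
     pij c34 s34 c33 c44 = 0 /\ pij c41 s41 c44 c11 = 0).
Proof.
  intros.
  pose proof (key c11 c22 c33 c44 c12 c23 c34 c41 s12 s23 s34 s41) as K.
  set (P := p4 c11 c22 c33 c44 c12 c23 c34 c41 s12 s23 s34 s41) in *.
  set (a := q41 c12 c23 c34 c41 s12 s23 s34 s41) in *.
  set (b := q42 c12 c23 c34 c41 s12 s23 s34 s41) in *.
  assert (H : pij c12 s12 c11 c22 = 0 -> pij c23 s23 c22 c33 = 0 ->
     pij c34 s34 c33 c44 = 0 -> pij c41 s41 c44 c11 = 0 -> a^2 + b^2 = -2*P).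
  { unfold pij; intros H1 H2 H3 H4.
    replace (c12^2+s12^2) with (c11*c22) in K by lra.
    replace (c23^2+s23^2) with (c22*c33) in K by lra.
    replace (c34^2+s34^2) with (c33*c44) in K by lra.
    replace (c41^2+s41^2) with (c44*c11) in K by lra.
    rewrite K; ring. }
  split.
  - intros (H0 & H1 & H2 & H3 & H4).
    specialize (H H1 H2 H3 H4). rewrite H0 in H.
    assert (a = 0) by nra. assert (b = 0) by nra. tauto.
  - intros (Ha & Hb & H1 & H2 & H3 & H4).
    specialize (H H1 H2 H3 H4). rewrite Ha, Hb in H.
    repeat split; auto. lra.
Qed.
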